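(* Let $\mathbb{F}$ be a field of characteristic zero, $n\ge1$, $a\in(\mathbb{F}^* )^n$ and $B\in\mathbb{F}^{n\times n}$ symmetric, and suppose that $G(a,B)$ is twin-free (no two rows of $B$ are equal). Let $k\in\mathbb{N}$ and let $p_{a,B}:\mathbb{F}\mathcal{G}_k\to V^{\otimes k}$ be the linear map defined below. Then (1) the kernel of $p_{a,B}$ on $\mathbb{F}\mathcal{G}_k$ equals the ideal $\mathcal I_k=\{\gamma\in\mathbb{F}\mathcal{G}_k : \hom(\gamma\cdot F,G(a,B))=0\text{ for all }F\in\mathcal{G}_k\}$; and (2) $p_{a,B}(\mathbb{F}\mathcal{G}_k)=(V^{\otimes k})^{\Gamma(a,B)}$, the space of tensors in $V^{\otimes k}$ invariant under the action of $\Gamma(a,B)$.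
   Context: Graphs are finite multigraphs, possibly with loops and multiple edges. $G(a,B)$ is the weighted graph on vertex set $[n]$ with vertex weights $a_i$ and edge weights $B_{i,j}$. For a graph $F$, $\hom(F,G(a,B))=\sum_{\phi:V(F)\to[n]}\prod_{v\in V(F)}a_{\phi(v)}\prod_{uv\in E(F)}B_{\phi(u),\phi(v)}$ (edges with multiplicity), extended linearly to formal linear combinations of graphs. A $k$-labelled graph is a graph in which $k$ distinct vertices are labelled $1,\dots,k$ (we identify these vertices with $[k]$); $\mathcal{G}_k$ is the set of $k$-labelled graphs. For $F_1,F_2\in\mathcal{G}_k$, the product $F_1\cdot F_2\in\mathcal{G}_k$ is obtained from the disjoint union by identifying vertices with the same label; $\mathbb{F}\mathcal{G}_k$ is the corresponding semigroup algebra of finite formal $\mathbb{F}$-linear combinations of $k$-labelled graphs. When applying $\hom$ to a labelled graph the labels are forgotten. Let $V=\mathbb{F}^n$ with standard basis $e_1,\dots,e_n$. The map $p_{a,B}$ is the linear map with $$p_{a,B}(F)=\sum_{\phi:V(F)\to[n]}\Big(\prod_{v\in V(F)\setminus[k]}a_{\phi(v)}\prod_{uv\in E(F)}B_{\phi(u),\phi(v)}\Big)e_{\phi(1)}\otimes\cdots\otimes e_{\phi(k)}$$ for $F\in\mathcal{G}_k$. $\Gamma(a,B)$ is the group of permutations $\gamma$ of $[n]$ with $a_{\gamma(i)}=a_i$ and $B_{\gamma(i),\gamma(j)}=B_{i,j}$ for all $i,j$; it acts on $V^{\otimes k}$ by $\gamma(e_{i_1}\otimes\cdots\otimes e_{i_k})=e_{\gamma(i_1)}\otimes\cdots\otimes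 e_{\gamma(i_k)}$. *)

(* Defs.v *)
From HB Require Import structures.
From mathcomp Require Import all_boot all_order all_algebra all_fingroup.
Set Implicit Arguments. Unset Strict Implicit. Unset Printing Implicit Defensive.
Import GRing.Theory.
Local Open Scope ring_scope.

(* A k-labelled multigraph (loops and parallel edges allowed):
   vertex set 'I_(k + nunl), the vertices lshift j (j : 'I_k), i.e. 0..k-1,
   carry the labels 1..k; the nunl other vertices are unlabelled.
   Edges form a finite list of (unordered) vertex pairs, with multiplicity. *)
Record klgraph (k : nat) := KLGraph {
  nunl : nat;
  kedges : seq ('I_(k + nunl) * 'I_(k + nunl)) }.

(* Product F1 . F2: disjoint union, identifying equally-labelled vertices. *)
Definition glue2 (k m1 m2 : nat) (v : 'I_(k + m2)) : 'I_(k + (m1 + m2)) :=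
  match split v with
  | inl j => lshift (m1 + m2) j
  | inr j => rshift k (rshift m1 j)
  end.
Definition glue1 (k m1 m2 : nat) (v : 'I_(k + m1)) : 'I_(k + (m1 + m2)) :=
  match split v with
  | inl j => lshift (m1 + m2) j
  | inr j => rshift k (lshift m2 j)
  end.

Definition kprod (k : nat) (F1 F2 : klgraph k) : klgraph k :=
  @KLGraph k (nunl F1 + nunl F2)
    ([seq (glue1 (nunl F2) e.1, glue1 (nunl F2) e.2) | e <- kedges F1] ++
     [seq (glue2 (nunl F1) e.1, glue2 (nunl F1) e.2) | e <- kedges F2]).

Definition klcomb (F : Type) (k : nat) := seq (F * klgraph k).

(* V^{(x) k} with V = F^n: coordinates indexed by i : 'I_k -> 'I_n,
   the coordinate i being that of e_{i 1} (x) ... (x) e_{i k}. *)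
Notation tensor F n k := {ffun {ffun 'I_k -> 'I_n} -> F}.

Section Hom.
Variables (F : fieldType) (n : nat) (a : 'I_n -> F) (B : 'M[F]_n).

Definition hom (k : nat) (G : klgraph k) : F :=
  \sum_(phi : {ffun 'I_(k + nunl G) -> 'I_n})
     (\prod_(v : 'I_(k + nunl G)) a (phi v)) *
     \prod_(e <- kedges G) B (phi e.1) (phi e.2).

Definition hom_comb (k : nat) (gamma : klcomb F k) (G : klgraph k) : F :=
  \sum_(x <- gamma) x.1 * hom (kprod x.2 G).

Definition pab (k : nat) (G : klgraph k) : tensor F n k :=
  [ffun i : {ffun 'I_k -> 'I_n} =>
    \sum_(phi : {ffun 'I_(k + nunl G) -> 'I_n}
            | [forall j : 'I_k, phi (lshift (nunl G) j) == i j])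
      (\prod_(v : 'I_(nunl G)) a (phi (rshift k v))) *
      \prod_(e <- kedges G) B (phi e.1) (phi e.2)].

Definition pab_comb (k : nat) (gamma : klcomb F k) : tensor F n k :=
  [ffun i => \sum_(x <- gamma) x.1 * pab x.2 i].

Definition Gamma : {set {perm 'I_n}} :=
  [set g : {perm 'I_n} | [forall i, a (g i) == a i] &&
                         [forall i, forall j, B (g i) (g j) == B i j]].

(* gamma (e_{i1} (x) ... (x) e_{ik}) = e_{gamma i1} (x) ... (x) e_{gamma ik} *)
Definition tact (k : nat) (g : {perm 'I_n}) (T : tensor F n k) : tensor F n k :=
  [ffun i : {ffun 'I_k -> 'I_n} => T [ffun j => (g^-1)%g (i j)]].

Definition Gamma_invariant (k : nat) (T : tensor F n k) : Prop :=
  forall g, g \in Gamma -> tact g T = T.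

End Hom.

Definition twin_free (F : fieldType) (n : nat) (B : 'M[F]_n) : Prop :=
  forall i j : 'I_n, row i B = row j B -> i = j.

(* Main.v *)
Require Import Defs.
From HB Require Import structures.
From mathcomp Require Import all_boot all_order all_algebra all_fingroup.
From mathcomp Require Import ring.
Set Implicit Arguments. Unset Strict Implicit. Unset Printing Implicit Defensive.
Import GRing.Theory.
Local Open Scope ring_scope.



Section Basic.
Variables (n : nat).

Definition join K m (u : {ffun 'I_K -> 'I_n}) (s : {ffun 'I_m -> 'I_n}) :
  {ffun 'I_(K+m) -> 'I_n} :=
  [ffun v => match split v with inl j => u j | inr j => s j end].

Lemma join_l K m u s (j : 'I_K) : @join K m u s (lshift m j) = u j.
Proof. by rewrite ffunE (unsplitK (inl _ j)). Qed.
Lemma join_r K m u s (j : 'I_m) : @join K m u s (rshift K j) = s j.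
Proof. by rewrite ffunE (unsplitK (inr _ j)). Qed.

Definition lpart K m (phi : {ffun 'I_(K+m) -> 'I_n}) : {ffun 'I_K -> 'I_n} :=
  [ffun j => phi (lshift m j)].
Definition rpart K m (phi : {ffun 'I_(K+m) -> 'I_n}) : {ffun 'I_m -> 'I_n} :=
  [ffun j => phi (rshift K j)].

Lemma joinK K m phi : @join K m (lpart phi) (rpart phi) = phi.
Proof.
apply/ffunP=> v; rewrite ffunE; case: splitP => j Hj.
  by rewrite ffunE; congr (phi _); apply: val_inj.
by rewrite ffunE; congr (phi _); apply: val_inj.
Qed.

Lemma sum_join (R : nmodType) K m (f : {ffun 'I_(K+m) -> 'I_n} -> R) :
  \sum_phi f phi = \sum_u \sum_s f (@join K m u s).
Proof.
rewrite pair_big /=.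
rewrite (reindex (fun p : {ffun 'I_K -> 'I_n} * {ffun 'I_m -> 'I_n} => join p.1 p.2)) //.
exists (fun phi => (lpart phi, rpart phi)) => [[u s] _|phi _] /=; last exact: joinK.
by congr pair; apply/ffunP => j; rewrite ffunE ?join_l ?join_r.
Qed.

Lemma prod_join (R : comNzSemiRingType) K m (f : 'I_n -> R) u s :
  \prod_(v : 'I_(K+m)) f (@join K m u s v) =
  (\prod_(j : 'I_K) f (u j)) * \prod_(j : 'I_m) f (s j).
Proof.
by rewrite big_split_ord /=; congr (_ * _); apply: eq_bigr => j _;
  rewrite ?join_l ?join_r.
Qed.

End Basic.



Section Pab.
Variables (F : fieldType) (n : nat) (a : 'I_n -> F) (B : 'M[F]_n).

Definition edgeval K m (u : {ffun 'I_K -> 'I_n}) (s : {ffun 'I_m -> 'I_n})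
   (E : seq ('I_(K+m) * 'I_(K+m))) :=
  \prod_(e <- E) B (join u s e.1) (join u s e.2).

Lemma pabE k (G : klgraph k) i :
  pab a B G i = \sum_(s : {ffun 'I_(nunl G) -> 'I_n})
     (\prod_v a (s v)) * edgeval i s (kedges G).
Proof.
rewrite /pab ffunE big_mkcond sum_join /= (bigD1 i) //= [X in _ + X]big1 ?addr0.
  apply: eq_bigr => s _.
  have -> : [forall j, join i s (lshift (nunl G) j) == i j].
    by apply/forallP => j; rewrite join_l.
  rewrite /edgeval; congr (_ * _); apply: eq_bigr => v _; by rewrite join_r.
move=> u Hu; apply: big1 => s _.
case: ifP => // /forallP H; case/eqP: Hu; apply/ffunP => j.
by rewrite -(join_l u s) (eqP (H j)).
Qed.

Lemma homE k (G : klgraph k) :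
  Defs.hom a B G = \sum_(u : {ffun 'I_k -> 'I_n}) (\prod_j a (u j)) * pab a B G u.
Proof.
rewrite /Defs.hom sum_join; apply: eq_bigr => u _.
rewrite pabE big_distrr; apply: eq_bigr => s _.
by rewrite prod_join /= -mulrA.
Qed.

Lemma glue1E k m1 m2 (i : {ffun 'I_k -> 'I_n}) s1 s2 (v : 'I_(k + m1)) :
  join i (@join n m1 m2 s1 s2) (glue1 m2 v) = join i s1 v.
Proof.
rewrite /glue1; case: splitP => j Hj.
  by rewrite (_ : v = lshift _ j) ?join_l //; apply: val_inj.
by rewrite (_ : v = rshift _ j) ?join_r ?join_l //; apply: val_inj.
Qed.

Lemma glue2E k m1 m2 (i : {ffun 'I_k -> 'I_n}) s1 s2 (v : 'I_(k + m2)) :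
  join i (@join n m1 m2 s1 s2) (glue2 m1 v) = join i s2 v.
Proof.
rewrite /glue2; case: splitP => j Hj.
  by rewrite (_ : v = lshift _ j) ?join_l //; apply: val_inj.
by rewrite (_ : v = rshift _ j) ?join_r //; apply: val_inj.
Qed.

Lemma pab_kprod k (G1 G2 : klgraph k) i :
  pab a B (kprod G1 G2) i = pab a B G1 i * pab a B G2 i.
Proof.
rewrite !pabE /= sum_join big_distrlr /=; apply: eq_bigr => s1 _.
apply: eq_bigr => s2 _.
rewrite (@prod_join n F (nunl G1) (nunl G2) a s1 s2).
rewrite /edgeval big_cat !big_map /=.
rewrite [X in _ * (X * _)](eq_bigr (fun e => B (join i s1 e.1) (join i s1 e.2)));
  last by move=> e _; rewrite !glue1E.
rewrite [X in _ * (_ * X)](eq_bigr (fun e => B (join i s2 e.1) (join i s2 e.2)));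
  last by move=> e _; rewrite !glue2E.
by rewrite -!mulrA; congr (_ * _); rewrite mulrCA.
Qed.

End Pab.



Section Rep.
Variables (F : fieldType) (n : nat) (a : 'I_n -> F) (B : 'M[F]_n).

Definition rep k (f : {ffun 'I_k -> 'I_n} -> F) :=
  exists g : klcomb F k, forall i, pab_comb a B g i = f i.

Lemma pab_combE k (g : klcomb F k) i :
  pab_comb a B g i = \sum_(x <- g) x.1 * pab a B x.2 i.
Proof. by rewrite ffunE. Qed.

Lemma rep_ext k (f g : {ffun 'I_k -> 'I_n} -> F) :
  (forall i, f i = g i) -> rep f -> rep g.
Proof. by move=> E [c H]; exists c => i; rewrite H E. Qed.

Lemma rep0 k : rep (fun _ : {ffun 'I_k -> 'I_n} => 0).
Proof. by exists [::] => i; rewrite pab_combE big_nil. Qed.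

Lemma repD k (f g : {ffun 'I_k -> 'I_n} -> F) :
  rep f -> rep g -> rep (fun i => f i + g i).
Proof.
move=> [c1 H1] [c2 H2]; exists (c1 ++ c2) => i.
by rewrite pab_combE big_cat -!pab_combE H1 H2.
Qed.

Lemma repZ k c (f : {ffun 'I_k -> 'I_n} -> F) :
  rep f -> rep (fun i => c * f i).
Proof.
move=> [g H]; exists [seq (c * x.1, x.2) | x <- g] => i.
by rewrite pab_combE big_map -H pab_combE big_distrr; apply: eq_bigr => x _ /=; rewrite mulrA.
Qed.

Lemma repM k (f g : {ffun 'I_k -> 'I_n} -> F) :
  rep f -> rep g -> rep (fun i => f i * g i).
Proof.
move=> [c1 H1] [c2 H2].
exists [seq (x.1 * y.1, kprod x.2 y.2) | x <- c1, y <- c2] => i.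
rewrite -H1 -H2 !pab_combE big_distrlr /=.
rewrite big_allpairs_dep /=.
apply: eq_bigr => x _; apply: eq_bigr => y _.
by rewrite pab_kprod mulrACA.
Qed.

Lemma rep1 k : rep (fun _ : {ffun 'I_k -> 'I_n} => 1).
Proof.
exists [:: (1, @KLGraph k 0 [::])] => i.
rewrite pab_combE big_seq1 mul1r pabE /=.
rewrite (eq_bigr (fun _ => 1)); last by move=> s _; rewrite big_ord0 /edgeval big_nil mulr1.
by rewrite sumr_const card_ffun !card_ord expn0.
Qed.

Lemma repE k (p q : 'I_k) : rep (fun i : {ffun 'I_k -> 'I_n} => B (i p) (i q)).
Proof.
exists [:: (1, @KLGraph k 0 [:: (lshift 0 p, lshift 0 q)])] => i.
rewrite pab_combE big_seq1 mul1r pabE /=.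
rewrite (eq_bigr (fun _ => B (i p) (i q))); last first.
  by move=> s _; rewrite big_ord0 /edgeval big_seq1 mul1r !join_l.
by rewrite sumr_const card_ffun !card_ord expn0.
Qed.

Lemma repC k c : rep (fun _ : {ffun 'I_k -> 'I_n} => c).
Proof. by apply: rep_ext (repZ c (@rep1 k)) => i; rewrite mulr1. Qed.


Lemma repS k (I : Type) (r : seq I) (P : pred I) (f : I -> {ffun 'I_k -> 'I_n} -> F) :
  (forall x, rep (f x)) -> rep (fun i => \sum_(x <- r | P x) f x i).
Proof.
move=> H; elim: r => [|x r IH].
  by apply: rep_ext (@rep0 k) => i; rewrite big_nil.
case Px: (P x).
  by apply: rep_ext (repD (H x) IH) => i; rewrite big_cons Px.
by apply: rep_ext IH => i; rewrite big_cons Px.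
Qed.

Lemma repP k (I : Type) (r : seq I) (P : pred I) (f : I -> {ffun 'I_k -> 'I_n} -> F) :
  (forall x, rep (f x)) -> rep (fun i => \prod_(x <- r | P x) f x i).
Proof.
move=> H; elim: r => [|x r IH].
  by apply: rep_ext (@rep1 k) => i; rewrite big_nil.
case Px: (P x).
  by apply: rep_ext (repM (H x) IH) => i; rewrite big_cons Px.
by apply: rep_ext IH => i; rewrite big_cons Px.
Qed.

Lemma repI k (f : {ffun 'I_k -> 'I_n} -> F) c :
  rep f -> rep (fun i => (f i == c)%:R).
Proof.
move=> Hf.
pose vals := [seq f i | i <- enum {ffun 'I_k -> 'I_n}].
have H : rep (fun i => \prod_(d <- vals | d != c) ((c - d)^-1 * (f i + - d))).
  apply: repP => d; apply: repZ; apply: repD Hf (repC _ _).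
apply: rep_ext H => i.
case: eqP => [->|Hne].
  rewrite big1_seq // => d /andP [Hd _].
  by rewrite mulVf // subr_eq0 eq_sym.
apply/eqP; rewrite prodf_seq_eq0; apply/hasP; exists (f i).
  by apply: map_f; rewrite mem_enum.
by apply/andP; split; [apply/eqP|rewrite subrr mulr0].
Qed.

Definition cst K m m' (v : 'I_(K + m + m')) : 'I_(K + (m + m')) :=
  cast_ord (esym (addnA K m m')) v.

Definition unl K m (G : klgraph (K + m)) : klgraph K :=
  @KLGraph K (m + nunl G) [seq (cst e.1, cst e.2) | e <- kedges G].

Lemma cst_join K m m' u t s (v : 'I_(K + m + m')) :
  join u (@join n m m' t s) (cst v) = join (@join n K m u t) s v.
Proof.
case: (splitP v) => [w Hw|w Hw].
  rewrite (_ : v = lshift m' w); last by apply: val_inj.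
  rewrite join_l; case: (splitP w) => [j Hj|j Hj].
    rewrite (_ : w = lshift m j); last by apply: val_inj.
    rewrite join_l (_ : cst _ = lshift (m + m') j) ?join_l //.
    by apply: val_inj => /=.
  rewrite (_ : w = rshift K j); last by apply: val_inj.
  rewrite join_r (_ : cst _ = rshift K (lshift m' j)) ?join_r ?join_l //.
  by apply: val_inj => /=.
rewrite (_ : v = rshift (K + m) w); last by apply: val_inj.
rewrite join_r (_ : cst _ = rshift K (rshift m w)) ?join_r ?join_r //.
by apply: val_inj => /=; rewrite addnA.
Qed.

Lemma pab_unl K m (G : klgraph (K + m)) u :
  pab a B (unl G) u =
  \sum_(t : {ffun 'I_m -> 'I_n}) (\prod_l a (t l)) * pab a B G (join u t).
Proof.
rewrite pabE /= sum_join; apply: eq_bigr => t _.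
rewrite pabE big_distrr; apply: eq_bigr => s _.
rewrite prod_join -mulrA; congr (_ * (_ * _)).
rewrite /edgeval big_map; apply: eq_bigr => e _.
by rewrite !cst_join.
Qed.

Lemma repU K m (f : {ffun 'I_(K + m) -> 'I_n} -> F) :
  rep f ->
  rep (fun u : {ffun 'I_K -> 'I_n} =>
         \sum_(t : {ffun 'I_m -> 'I_n}) (\prod_l a (t l)) * f (join u t)).
Proof.
move=> [g H]; exists [seq (x.1, unl x.2) | x <- g] => u.
under eq_bigr do rewrite -H pab_combE big_distrr.
rewrite pab_combE big_map exchange_big /=; apply: eq_bigr => x _.
rewrite pab_unl big_distrr; apply: eq_bigr => t _.
by rewrite mulrCA.
Qed.

End Rep.



Section Inv.
Variables (F : fieldType) (n : nat) (a : 'I_n -> F) (B : 'M[F]_n).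

Lemma pab_perm k (G : klgraph k) (g : {perm 'I_n}) (i : {ffun 'I_k -> 'I_n}) :
  (forall x, a (g x) = a x) -> (forall x y, B (g x) (g y) = B x y) ->
  pab a B G [ffun j => g (i j)] = pab a B G i.
Proof.
move=> Ha HB; rewrite !pabE.
rewrite (reindex (fun s : {ffun 'I_(nunl G) -> 'I_n} => [ffun v => g (s v)])) /=; last first.
  exists (fun s : {ffun 'I_(nunl G) -> 'I_n} => [ffun v => (g^-1)%g (s v)]) => s _;
  by apply/ffunP => v; rewrite !ffunE ?permK ?permKV.
apply: eq_bigr => s _; congr (_ * _).
  by apply: eq_bigr => v _; rewrite ffunE Ha.
rewrite /edgeval; apply: eq_bigr => e _.
have J : forall v, join [ffun j => g (i j)] [ffun v => g (s v)] v = g (join i s v).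
  by move=> v; rewrite !ffunE; case: (split v) => j; rewrite ffunE.
by rewrite !J HB.
Qed.

Lemma GammaP (g : {perm 'I_n}) :
  reflect ((forall x, a (g x) = a x) /\ (forall x y, B (g x) (g y) = B x y))
          (g \in Gamma a B).
Proof.
rewrite inE; apply: (iffP andP) => [[/forallP H1 /forallP H2]|[H1 H2]].
  by split=> [x|x y]; [apply/eqP|have /forallP := H2 x; move/(_ y)/eqP].
by split; apply/forallP => x; [apply/eqP|apply/forallP => y; apply/eqP].
Qed.

Lemma GammaV (g : {perm 'I_n}) : g \in Gamma a B -> (g^-1)%g \in Gamma a B.
Proof.
move/GammaP => [H1 H2]; apply/GammaP; split=> [x|x y].
  by rewrite -{2}(permKV g x) H1.
by rewrite -{2}(permKV g x) -{2}(permKV g y) H2.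
Qed.

Lemma pab_comb_perm k (c : klcomb F k) (g : {perm 'I_n}) (i : {ffun 'I_k -> 'I_n}) :
  g \in Gamma a B -> pab_comb a B c [ffun j => g (i j)] = pab_comb a B c i.
Proof.
move/GammaP => [H1 H2]; rewrite !pab_combE; apply: eq_bigr => x _.
by rewrite pab_perm.
Qed.

Lemma pab_comb_inv k (c : klcomb F k) : Gamma_invariant a B (pab_comb a B c).
Proof.
move=> g Hg; apply/ffunP => i; rewrite /tact ffunE.
by rewrite pab_comb_perm // GammaV.
Qed.

End Inv.



Section Main.
Variables (F : fieldType) (n : nat) (a : 'I_n -> F) (B : 'M[F]_n).
Hypothesis Bsym : B^T = B.
Hypothesis tf : twin_free B.
Variable k : nat.

Lemma Bs x y : B x y = B y x.
Proof. by rewrite -{1}Bsym mxE. Qed.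

Lemma rows_eq x y : (forall l, B x l = B y l) -> x = y.
Proof. by move=> H; apply: tf; apply/rowP => l; rewrite !mxE. Qed.

Lemma prod_bool (T : finType) (P : pred T) :
  \prod_(j : T) ((P j)%:R : F) = ([forall j, P j]%:R : F).
Proof.
case: (boolP [forall j, P j]) => [/forallP H|].
  by rewrite big1 // => j _; rewrite H.
rewrite negb_forall => /existsP [j /negbTE Hj].
by rewrite (bigD1 j) //= Hj mul0r.
Qed.

Definition P1 (u : {ffun 'I_(k + n) -> 'I_n}) :=
  [forall j, forall l, B (u (rshift k j)) (u (rshift k l)) == B j l].
Definition P2 (x : {ffun 'I_k -> 'I_n}) (u : {ffun 'I_(k + n) -> 'I_n}) :=
  [forall p, forall l, B (u (lshift n p)) (u (rshift k l)) == B (x p) l].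
Definition Lb j (w : {ffun 'I_(k + n + 1) -> 'I_n}) :=
  [forall l, B (w (lshift 1 (rshift k l))) (w (rshift (k + n) ord0)) == B l j].
Definition q j (u : {ffun 'I_(k + n) -> 'I_n}) : F :=
  \sum_(t1 : {ffun 'I_1 -> 'I_n}) (\prod_l a (t1 l)) * (Lb j (join u t1))%:R.
Definition P3 u := [forall j, q j u == a j].
Definition Ef x u : F := (P1 u)%:R * (P2 x u)%:R * (P3 u)%:R.

Lemma repP1 : rep a B (fun u => (P1 u)%:R).
Proof.
have H : rep a B (fun u : {ffun 'I_(k + n) -> 'I_n} => \prod_j \prod_l
   ((B (u (rshift k j)) (u (rshift k l)) == B j l)%:R : F)).
  by apply: repP => j; apply: repP => l; apply: repI; apply: repE.
apply: rep_ext H => u; rewrite /P1 -prod_bool; apply: eq_bigr => j _.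
by rewrite prod_bool.
Qed.

Lemma repP2 x : rep a B (fun u => (P2 x u)%:R).
Proof.
have H : rep a B (fun u : {ffun 'I_(k + n) -> 'I_n} => \prod_p \prod_l
   ((B (u (lshift n p)) (u (rshift k l)) == B (x p) l)%:R : F)).
  by apply: repP => j; apply: repP => l; apply: repI; apply: repE.
apply: rep_ext H => u; rewrite /P2 -prod_bool; apply: eq_bigr => j _.
by rewrite prod_bool.
Qed.

Lemma repq j : rep a B (q j).
Proof.
have H : rep a B (fun w : {ffun 'I_(k + n + 1) -> 'I_n} => \prod_l
   ((B (w (lshift 1 (rshift k l))) (w (rshift (k + n) ord0)) == B l j)%:R : F)).
  by apply: repP => l; apply: repI; apply: repE.
have H2 : rep a B (fun w => (Lb j w)%:R).
  by apply: rep_ext H => w; rewrite /Lb -prod_bool.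
exact: (repU H2).
Qed.

Lemma repP3 : rep a B (fun u => (P3 u)%:R).
Proof.
have H : rep a B (fun u : {ffun 'I_(k + n) -> 'I_n} => \prod_j ((q j u == a j)%:R : F)).
  by apply: repP => j; apply: repI; apply: repq.
by apply: rep_ext H => u; rewrite /P3 -prod_bool.
Qed.

Lemma repEf x : rep a B (Ef x).
Proof. exact: repM (repM repP1 (repP2 x)) repP3. Qed.


Lemma colP (s : {perm 'I_n}) v j :
  (forall x y, B (s x) (s y) = B x y) ->
  [forall l, B (s l) v == B l j] = (v == s j).
Proof.
move=> HB; apply/forallP/eqP => [H|->]; last by move=> l; rewrite HB.
rewrite -(permKV s v); congr (s _); apply: rows_eq => l.
by rewrite Bs -HB permKV (eqP (H l)) Bs.
Qed.

Lemma q_perm (s : {perm 'I_n}) (u : {ffun 'I_(k + n) -> 'I_n}) j :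
  (forall x y, B (s x) (s y) = B x y) -> (forall l, u (rshift k l) = s l) ->
  q j u = a (s j).
Proof.
move=> HB Hu; rewrite /q (reindex (fun v : 'I_n => [ffun _ : 'I_1 => v])) /=; last first.
  exists (fun t1 : {ffun 'I_1 -> 'I_n} => t1 ord0) => [v _|t1 _]; first by rewrite ffunE.
  apply/ffunP => o; rewrite ffunE; congr (t1 _); apply: val_inj.
  by case: o => [[|m] //].
rewrite (bigD1 (s j)) //= [X in _ + X]big1 ?addr0.
  rewrite big_ord1 ffunE /Lb.
  rewrite (_ : [forall l, _] = (s j == s j)); first by rewrite eqxx mulr1.
  rewrite -colP //; apply: eq_forallb => l.
  by rewrite join_l join_r Hu ffunE.
move=> v Hv; rewrite /Lb.
rewrite (_ : [forall l, _] = (v == s j)); first by rewrite (negbTE Hv) mulr0.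
rewrite -colP //; apply: eq_forallb => l.
by rewrite join_l join_r Hu ffunE.
Qed.

Lemma Ef_val x (i : {ffun 'I_k -> 'I_n}) (t : {ffun 'I_n -> 'I_n}) :
  Ef x (join i t) = \sum_(s in Gamma a B)
     ((t == [ffun l => s l]) && (i == [ffun p => s (x p)]))%:R.
Proof.
case: (boolP [exists s in Gamma a B,
          (t == [ffun l => s l]) && (i == [ffun p => s (x p)])]).
  case/existsP => s /andP [Hs /andP [/eqP Ht /eqP Hi]].
  have [Ha' HB'] := (elimT (GammaP a B s) Hs).
  rewrite (bigD1 s) //= Ht Hi !eqxx big1 ?addr0; last first.
    move=> s' /andP [_ Hne].
    rewrite (_ : ([ffun l => s l] == [ffun l => s' l]) = false) //.
    apply/negbTE; apply: contra Hne => /eqP E; apply/eqP/permP => l.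
    by have := congr1 (fun f : {ffun 'I_n -> 'I_n} => f l) E; rewrite !ffunE.
  rewrite /Ef.
  have -> : P1 (join [ffun p => s (x p)] [ffun l => s l]).
    by apply/forallP => j; apply/forallP => l; rewrite !join_r !ffunE HB'.
  have -> : P2 x (join [ffun p => s (x p)] [ffun l => s l]).
    by apply/forallP => j; apply/forallP => l; rewrite join_l join_r !ffunE HB'.
  have -> : P3 (join [ffun p => s (x p)] [ffun l => s l]).
    apply/forallP => j; rewrite (q_perm (s := s)) ?Ha' // => l.
    by rewrite join_r ffunE.
  by rewrite !mulr1.
move=> Hn; rewrite big1; last first.
  move=> s Hs; case E: (_ && _) => //.
  by case/negP: Hn; apply/existsP; exists s; rewrite Hs E.
rewrite /Ef; case: (boolP (P1 _)) => H1; last by rewrite !mul0r.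
case: (boolP (P2 _ _)) => H2; last by rewrite mulr0 mul0r.
case: (boolP (P3 _)) => H3; last by rewrite mulr0.
exfalso.
have hB : forall j l, B (t j) (t l) = B j l.
  by move=> j l; have /forallP/(_ l)/eqP := forallP H1 j; rewrite !join_r.
have Hinj : injective t.
  move=> j1 j2 E; apply: rows_eq => l.
  by rewrite -(hB j1 l) E hB.
pose s := perm Hinj.
have hsB : forall x y, B (s x) (s y) = B x y by move=> y z; rewrite !permE hB.
have hsA : forall j, a (s j) = a j.
  move=> j; have /eqP := forallP H3 j.
  by rewrite (q_perm (s := s)) // => l; rewrite join_r permE.
have Hs : s \in Gamma a B by apply/(GammaP a B).
have Hi : forall p, i p = s (x p).
  move=> p; apply: rows_eq => c; rewrite -(permKV s c) hsB.
  have /forallP/(_ (s^-1 c)%g)/eqP := forallP H2 p.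
  by rewrite join_l join_r -permE.
case/negP: Hn; apply/existsP; exists s; rewrite Hs /=.
apply/andP; split; apply/eqP/ffunP => l; rewrite ffunE ?permE //.
by rewrite Hi permE.
Qed.


Hypothesis Ha : forall i, a i != 0.

Definition Qx (x i : {ffun 'I_k -> 'I_n}) : F :=
  \sum_(s in Gamma a B) (i == [ffun p => s (x p)])%:R.

Lemma repQx x : rep a B (Qx x).
Proof.
have H := repU (K := k) (m := n) (repEf x).
have Hp : \prod_l a l != 0 by apply/prodf_neq0 => l _.
apply: rep_ext (repZ (\prod_l a l)^-1 H) => i /=.
under [X in _ * X]eq_bigr do rewrite Ef_val big_distrr.
rewrite exchange_big /= /Qx big_distrr; apply: eq_bigr => s Hs.
rewrite (bigD1 [ffun l => s l]) //= [X in _ + X]big1 ?addr0; last first.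
  by move=> t /negbTE Ht; rewrite Ht /= mulr0.
rewrite eqxx /=.
have [Ha' _] := elimT (GammaP a B s) Hs.
rewrite [X in _ * (X * _)](eq_bigr (fun l => a l)); last by move=> l _; rewrite ffunE Ha'.
by rewrite mulKf.
Qed.

End Main.



Theorem theorem2p1 (F : fieldType) (n : nat) (a : 'I_n -> F) (B : 'M[F]_n)
    (k : nat) :
  [pchar F] =i pred0 -> (0 < n)%N -> (forall i, a i != 0) ->
  B^T = B -> twin_free B ->
  (forall gamma : klcomb F k,
     pab_comb a B gamma = 0 <-> (forall G : klgraph k, hom_comb a B gamma G = 0))
  /\
  (forall T : tensor F n k,
     (exists gamma : klcomb F k, pab_comb a B gamma = T) <-> Gamma_invariant a B T).
Proof.
move=> Hc Hn Ha Bsym tf.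
have Hm : (#|Gamma a B|%:R : F) != 0.
  rewrite ((pcharf0P F).1 Hc) -lt0n; apply/card_gt0P; exists 1%g.
  by apply/(GammaP a B); split => *; rewrite !perm1.
have hcE : forall (g : klcomb F k) G, hom_comb a B g G =
    \sum_(u : {ffun 'I_k -> 'I_n}) (\prod_j a (u j)) * pab a B G u * pab_comb a B g u.
  move=> g G; rewrite /hom_comb.
  under eq_bigr do rewrite homE big_distrr.
  rewrite exchange_big; apply: eq_bigr => u _.
  rewrite pab_combE big_distrr; apply: eq_bigr => x _ /=.
  rewrite pab_kprod; ring.
have Z0 : forall u, (0 : tensor F n k) u = 0 by move=> u; rewrite ffunE.
split.
  move=> g; split.
    by move=> H G; rewrite hcE big1 // => u _; rewrite H Z0 mulr0.
  move=> H; apply/ffunP => x.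
  have [d Hd] := repQx Bsym tf Ha x.
  set P := pab_comb a B g.
  have S : \sum_(u : {ffun 'I_k -> 'I_n}) (\prod_j a (u j)) * Qx a B x u * P u = 0.
    transitivity (\sum_(y <- d) y.1 * hom_comb a B g y.2); last first.
      by rewrite big1 // => y _; rewrite H mulr0.
    under [RHS]eq_bigr do rewrite hcE big_distrr.
    rewrite exchange_big; apply: eq_bigr => u _.
    rewrite -Hd pab_combE big_distrr big_distrl; apply: eq_bigr => y _ /=.
    ring.
  have S2 : \sum_(u : {ffun 'I_k -> 'I_n}) (\prod_j a (u j)) * Qx a B x u * P u =
            #|Gamma a B|%:R * ((\prod_j a (x j)) * P x).
    rewrite /Qx (eq_bigr (fun u : {ffun 'I_k -> 'I_n} => \sum_(s in Gamma a B)
        (\prod_j a (u j)) * (u == [ffun p => s (x p)])%:R * P u)); last first.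
      by move=> u _; rewrite big_distrr big_distrl.
    rewrite exchange_big /= mulr_natl -sumr_const; apply: eq_bigr => s Hs.
    have [Ha' _] := elimT (GammaP a B s) Hs.
    rewrite (bigD1 [ffun p => s (x p)]) //= eqxx [X in _ + X]big1 ?addr0; last first.
      by move=> u /negbTE ->; rewrite mulr0 mul0r.
    rewrite mulr1 /P pab_comb_perm //; congr (_ * _).
    by apply: eq_bigr => j _; rewrite ffunE Ha'.
  have Hw : \prod_j a (x j) != 0 by apply/prodf_neq0 => j _.
  rewrite Z0; apply/eqP.
  have : (#|Gamma a B|%:R * ((\prod_j a (x j)) * P x) == 0) by rewrite -S2 S.
  by rewrite !mulf_eq0 (negbTE Hm) (negbTE Hw).
move=> T; split.
  by move=> [g <-]; exact: pab_comb_inv.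
move=> HT.
have R : rep a B (fun i => (#|Gamma a B|%:R)^-1 * \sum_x T x * Qx a B x i).
  by apply: repZ; apply: repS => x; apply: repZ; exact: repQx.
have [g Hg] : rep a B (fun i => T i).
  apply: rep_ext R => i.
  rewrite (eq_bigr (fun x => \sum_(s in Gamma a B) T x * (i == [ffun p => s (x p)])%:R));
    last by move=> x _; rewrite /Qx big_distrr.
  rewrite exchange_big /= (eq_bigr (fun _ => T i)).
    by rewrite sumr_const -[T i *+ _]mulr_natl mulKf.
  move=> s Hs.
  rewrite (bigD1 [ffun p => (s^-1)%g (i p)]) //= [X in _ + X]big1 ?addr0.
    have -> : i == [ffun p => s ([ffun p => (s^-1)%g (i p)] p)].
      by apply/eqP/ffunP => p; rewrite !ffunE permKV.
    rewrite mulr1; have := HT s Hs; move/ffunP/(_ i); rewrite /tact ffunE.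
    by move=> ->.
  move=> x Hx; rewrite (_ : (i == _) = false) ?mulr0 //.
  apply/negbTE; apply: contra Hx => /eqP ->.
  by apply/eqP/ffunP => p; rewrite !ffunE permK.
by exists g; apply/ffunP => i; exact: Hg i.
Qed.
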